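(* Let $0<q<1$, $b<q^{-1}$, $\mathrm{v}\in\mathbb{Z}_{\geq 0}$ and $0<a<q^{\mathrm{v}}$. Define, for $x\in\mathbb{Z}_{\geq0}$, $$\check{\xi}_{\mathrm{v}}(x;a,b)=\frac{(aq^{-\mathrm{v}};q)_{\mathrm{v}}}{(bq;q)_{\mathrm{v}}}\sum_{k=0}^{\mathrm{v}}\frac{(q^{-\mathrm{v}};q)_k\,(a^{-1}bq^{\mathrm{v}+1};q)_k}{(a^{-1}q;q)_k\,(q;q)_k}\,q^{(x+1)k}.$$ Then $\check{\xi}_{\mathrm{v}}(x;a,b)>0$ for all $x\in\mathbb{Z}_{\geq 0}$.
   Context: $(z;q)_k=\prod_{i=0}^{k-1}(1-zq^i)$, $(z;q)_0=1$. The function $\check{\xi}_{\mathrm{v}}(x;a,b)$ equals the little $q$-Jacobi polynomial in universal normalisation, $\check{P}_{\mathrm{v}}(x;a,b)=\frac{(a^{-1}q^{-\mathrm{v}};q)_{\mathrm{v}}}{(bq;q)_{\mathrm{v}}}\,{}_2\phi_1(q^{-\mathrm{v}},abq^{\mathrm{v}+1};aq;q;q^{x+1})$, with $a$ replaced by $a^{-1}$ (the ''virtual state polynomial''). The case $b=0$ is included (little $q$-Laguerre case). *)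

(* Defs.v *)
From mathcomp Require Import all_boot all_order all_algebra.
Set Implicit Arguments. Unset Strict Implicit. Unset Printing Implicit Defensive.
Import Order.TTheory GRing.Theory Num.Theory.
Local Open Scope ring_scope.

Definition qpoch {R : ringType} (z q : R) (k : nat) : R :=
  \prod_(i < k) (1 - z * q ^+ i).

Definition xi_check {R : fieldType} (v : nat) (q a b : R) (x : nat) : R :=
  qpoch (a * q ^- v) q v / qpoch (b * q) q v *
  \sum_(k < v.+1)
     (qpoch (q ^- v) q k * qpoch (a^-1 * b * q ^+ v.+1) q k)
     / (qpoch (a^-1 * q) q k * qpoch q q k) * q ^+ ((x.+1) * k).

(* Main.v *)
Require Import Defs.
From mathcomp Require Import all_boot all_order all_algebra.
From mathcomp Require Import ring lra.
Import Order.TTheory GRing.Theory Num.Theory.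
Local Open Scope ring_scope.
Set Implicit Arguments. Unset Strict Implicit.

Definition Psi {R : fieldType} (q A B C z : R) (N : nat) : R :=
  \sum_(k < N) (qpoch A q k * qpoch B q k) / (qpoch C q k * qpoch q q k) * z ^+ k.

Lemma qpoch0 (R : ringType) (z q : R) : qpoch z q 0 = 1.
Proof. by rewrite /qpoch big_ord0. Qed.

Lemma qpochSf (R : comRingType) (z q : R) k :
  qpoch z q k.+1 = (1 - z) * qpoch (z * q) q k.
Proof.
rewrite /qpoch big_ord_recl expr0 mulr1; congr (_ * _).
by apply: eq_bigr => i _; rewrite /= exprS mulrA.
Qed.

Lemma qpochSb (R : ringType) (z q : R) k :
  qpoch z q k.+1 = qpoch z q k * (1 - z * q ^+ k).
Proof. by rewrite /qpoch big_ord_recr. Qed.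

Section Rel.
Variable R : realFieldType.
Variables (q : R).
Hypotheses (hq0 : 0 < q) (hq1 : q < 1).

Lemma q1t j : 1 - q * q ^+ j != 0.
Proof.
rewrite -exprS subr_eq0 eq_sym; apply/negP => /eqP h.
have := exprn_ilt1 j.+1 (ltW hq0) hq1; by rewrite h ltxx.
Qed.

Lemma term2 (A B C X Y U V z zj : R) (t : R) : 1 - t != 0 ->
  (1 - A) * X * ((1 - B) * Y) / ((1 - C) * U * (V * (1 - t))) * (z * zj) -
  X * (1 - A * t) * ((1 - B) * Y) / ((1 - C) * U * (V * (1 - t))) * (z * zj) =
  - A * z * (1 - B) / (1 - C) * (X * Y / (U * V) * zj).
Proof.
move=> ht; rewrite !invfM.
move: (U^-1) (V^-1) ((1-C)^-1) => Ui Vi Ci.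
field; done.
Qed.

Lemma rel2 (A B C z : R) N :
  Psi q A B C z N.+1 =
  Psi q (A * q) B C z N.+1 - A * z * (1 - B) / (1 - C) * Psi q (A * q) (B * q) (C * q) z N.
Proof.
have H : Psi q A B C z N.+1 - Psi q (A * q) B C z N.+1 =
   - A * z * (1 - B) / (1 - C) * Psi q (A * q) (B * q) (C * q) z N.
  rewrite /Psi !big_ord_recl !qpoch0 opprD addrACA subrr add0r -sumrB mulr_sumr.
  apply: eq_bigr => j _.
  rewrite !lift0 (qpochSb (A * q) q j) (qpochSb q q j) (qpochSf A) (qpochSf B) (qpochSf C) !exprS.
  rewrite -[A * q * q ^+ j]mulrA.
  by apply: term2; apply: q1t.
have -> : Psi q A B C z N.+1 = Psi q (A * q) B C z N.+1 +
   (Psi q A B C z N.+1 - Psi q (A * q) B C z N.+1) by ring.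
rewrite H; ring.
Qed.

Lemma term1 (A B C X Y U V z zj : R) (t : R) : 1 - t != 0 ->
  (1 - A) * X * ((1 - B) * Y) / ((1 - C) * U * (V * (1 - t))) * (z * zj) -
  (1 - A) * X * ((1 - B) * Y) / ((1 - C) * U * (V * (1 - t))) * (t * (z * zj)) =
  z * (1 - A) * (1 - B) / (1 - C) * (X * Y / (U * V) * zj).
Proof.
move=> ht; rewrite !invfM.
move: (U^-1) (V^-1) ((1-C)^-1) => Ui Vi Ci.
field; done.
Qed.

Lemma rel1 (A B C z : R) N :
  Psi q A B C z N.+1 - Psi q A B C (q * z) N.+1 =
   z * (1 - A) * (1 - B) / (1 - C) * Psi q (A * q) (B * q) (C * q) z N.
Proof.
rewrite /Psi !big_ord_recl !qpoch0 opprD addrACA !expr0 subrr add0r -sumrB mulr_sumr.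
apply: eq_bigr => j _.
rewrite !lift0 (qpochSb q q j) (qpochSf A) (qpochSf B) (qpochSf C) exprMn !exprS.
by apply: term1; apply: q1t.
Qed.
Lemma qneq0 : q != 0. Proof. by rewrite gt_eqF. Qed.

Lemma Aq_eq n : q ^- n.+1 * q = q ^- n.
Proof. have := qneq0 => h. rewrite exprS; field; rewrite expf_eq0 (negPf h) andbF //. Qed.

Lemma psi_ext B C z n : Psi q (q ^- n) B C z n.+2 = Psi q (q ^- n) B C z n.+1.
Proof.
rewrite /Psi big_ord_recr /= (qpochSb _ q n) mulVf ?subrr ?mulr0 ?mul0r ?addr0 //.
by rewrite expf_eq0 (negPf qneq0) andbF.
Qed.

Lemma qcv n : forall B C, (forall i, (i < n)%N -> 1 - C * q ^+ i != 0) ->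
  Psi q (q ^- n) B C q n.+1 * qpoch C q n = \prod_(i < n) (B - C * q ^+ i).
Proof.
elim: n => [|n IH] B C hC.
  by rewrite /Psi big_ord1 !qpoch0 big_ord0 !expr0 !mulr1 invr1 mulr1.
rewrite rel2 Aq_eq psi_ext.
have hC0 : 1 - C != 0 by have := hC 0%N isT; rewrite expr0 mulr1.
have e1 : Psi q (q ^- n) B C q n.+1 * qpoch C q n.+1 =
   \prod_(i < n) (B - C * q ^+ i) * (1 - C * q ^+ n).
  rewrite qpochSb mulrA IH // => i hi; apply: hC; exact: ltnW.
have e2 : Psi q (q ^- n) (B * q) (C * q) q n.+1 * qpoch C q n.+1 =
   (1 - C) * (q ^+ n * \prod_(i < n) (B - C * q ^+ i)).
  rewrite qpochSf mulrCA IH; last first.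
    by move=> i hi; rewrite -mulrA -exprS; apply: hC.
  congr (_ * _).
  rewrite (eq_bigr (fun i : 'I_n => q * (B - C * q ^+ i))); last first.
    by move=> i _; ring.
  by rewrite prodrMl card_ord.
rewrite mulrBl e1 -[(_ * Psi _ _ _ _ _ _) * _]mulrA e2 big_ord_recr /=.
have := qneq0 => hq.
field; rewrite ?expf_eq0 ?(negPf hq) ?andbF ?hC0 //.
Qed.
End Rel.
Section Pos.
Variable R : realFieldType.
Variables (q : R).
Hypotheses (hq0 : 0 < q) (hq1 : q < 1).

Lemma qpow_gt0 i : 0 < q ^+ i. Proof. exact: exprn_gt0. Qed.
Lemma qpow_le1 i : q ^+ i <= 1. Proof. exact: exprn_ile1 (ltW hq0) (ltW hq1). Qed.

Lemma qpow_lt i m : (i < m)%N -> q ^+ m < q ^+ i.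
Proof.
move=> h; rewrite -(subnKC (ltnW h)) exprD.
have h1 : q ^+ (m - i) < 1 by rewrite exprn_ilt1 ?(ltW hq0) // subn_eq0 -ltnNge.
have h2 := qpow_gt0 i. nra.
Qed.

Lemma qpow_le i m : (i <= m)%N -> q ^+ m <= q ^+ i.
Proof.
move=> h; rewrite -(subnKC h) exprD.
have h1 := qpow_le1 (m - i). have h2 := qpow_gt0 i. nra.
Qed.

Lemma pos_main n : forall a b x, 0 < a -> a < q ^+ n -> b < q^-1 ->
  0 < Psi q (q ^- n) (a^-1 * b * q ^+ n.+1) (a^-1 * q) (q ^+ x.+1) n.+1.
Proof.
elim: n => [|n IH] a b x ha0 ha1 hb.
  by rewrite /Psi big_ord1 !qpoch0 !expr0 !mulr1 invr1 mulr1.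
have hqn : q != 0 by rewrite gt_eqF.
have hbq : b * q < 1.
  by have := ltr_pM2r hq0 b q^-1; rewrite hb mulVf. 
move Adef : (q ^- n.+1) => A.
move Bdef : (a^-1 * b * q ^+ n.+2) => B.
move Cdef : (a^-1 * q) => C.
have hA : forall i, (i <= n)%N -> 1 - A * q ^+ i < 0.
  move=> i hi; rewrite subr_lt0 -Adef mulrC -[_ * _^-1]/(q ^+ i / q ^+ n.+1).
  by rewrite ltr_pdivlMr ?qpow_gt0 // mul1r qpow_lt.
have hC : forall i, (i <= n)%N -> 1 - C * q ^+ i < 0.
  move=> i hi; rewrite subr_lt0 -Cdef -mulrA -exprS mulrC.
  rewrite ltr_pdivlMr // mul1r; apply: (lt_le_trans ha1); exact: qpow_le.
have hBC : forall i, (i <= n)%N -> B - C * q ^+ i < 0.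
  move=> i hi; rewrite -Bdef -Cdef.
  have e : b * q ^+ n.+2 = (b * q ^+ (n - i).+1) * q ^+ i.+1.
    by rewrite -mulrA -exprD addSn addnS subnK.
  have hP : q ^+ (n - i).+1 <= q by rewrite -[X in _ <= X]expr1 qpow_le.
  have hP0 := qpow_gt0 (n - i).+1.
  have hbP : b * q ^+ (n - i).+1 < 1.
    case: (lerP 0 b) => hb0; last by nra.
    by apply: le_lt_trans hbq; rewrite ler_wpM2l.
  have hQ := qpow_gt0 i.+1.
  have : b * q ^+ n.+2 < q ^+ i.+1 by rewrite e; nra.
  have -> : a^-1 * b * q ^+ n.+2 - a^-1 * q * q ^+ i = a^-1 * (b * q ^+ n.+2 - q ^+ i.+1).
    by rewrite (exprS q i); ring.
  by move=> h; rewrite pmulr_rlt0 ?invr_gt0 // subr_lt0.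
have hA0 : 1 - A < 0 by have := hA 0%N isT; rewrite expr0 mulr1.
have hC0 : 1 - C < 0 by have := hC 0%N isT; rewrite expr0 mulr1.
case: (lerP B 1) => hB.
  rewrite /Psi big_ord_recl !qpoch0 expr0 !mulr1 invr1 mulr1.
  apply: (lt_le_trans ltr01); rewrite lerDl; apply: sumr_ge0 => j _.
  have hj : (lift ord0 j <= n.+1)%N by rewrite lift0; exact: ltn_ord.
  rewrite -mulf_div -!prodf_div; apply: mulr_ge0; last first.
    by apply: exprn_ge0; apply: ltW; apply: qpow_gt0.
  apply: mulr_ge0; apply: prodr_ge0 => i _.
    have hi : (i <= n)%N by have := ltn_ord i; move=> h; rewrite -ltnS; apply: leq_trans hj.
    rewrite -divrNN; apply: divr_ge0; rewrite oppr_ge0 ltW //; [exact: hA | exact: hC].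
  apply: divr_ge0.
    have h1 := qpow_le1 i; have h2 := qpow_gt0 i.
    rewrite subr_ge0; case: (lerP 0 B) => hB0.
      by apply: le_trans hB; rewrite ler_piMr.
    by apply: (le_trans _ ler01); rewrite ltW // pmulr_llt0.
  rewrite -exprS subr_ge0; exact: qpow_le1.
have hpos : forall y, 0 < Psi q (A * q) (B * q) (C * q) (q ^+ y.+1) n.+1.
  move=> y.
  have ha0' : a != 0 by rewrite gt_eqF.
  have eA : A * q = q ^- n by rewrite -Adef Aq_eq.
  have eB : B * q = (a / q)^-1 * (b * q) * q ^+ n.+1.
    by rewrite -Bdef !exprS; field; rewrite ha0' hqn.
  have eC : C * q = (a / q)^-1 * q.
    by rewrite -Cdef; field; rewrite ha0' hqn.
  rewrite eA eB eC; apply: IH.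
  - by apply: divr_gt0.
  - by rewrite ltr_pdivrMr // -exprSr.
  - by apply: (lt_trans hbq); rewrite invf_gt1.
have mono : forall y, Psi q A B C (q ^+ 1) n.+2 <= Psi q A B C (q ^+ y.+1) n.+2.
  elim=> [|y IHy] //; apply: (le_trans IHy); apply: ltW.
  have := rel1 hq0 hq1 A B C (q ^+ y.+1) n.+1; rewrite -exprS => h.
  rewrite -subr_lt0 h nmulr_rlt0 //.
  rewrite pmulr_rlt0 ?invr_lt0 //.
  by rewrite -mulrA mulr_gt0 ?qpow_gt0 // nmulr_rgt0 // subr_lt0.
apply: (lt_le_trans _ (mono x)); rewrite expr1.
have hne : forall i, (i < n.+1)%N -> 1 - C * q ^+ i != 0.
  by move=> i hi; apply: ltr0_neq0; apply: hC.
have e : Psi q A B C q n.+2 * qpoch C q n.+1 = \prod_(i < n.+1) (B - C * q ^+ i).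
  by rewrite -Adef; apply: qcv.
set D := qpoch C q n.+1 in e.
set N := \prod_(i < n.+1) (B - C * q ^+ i) in e.
have ND : 0 < N * D.
  rewrite /N /D /qpoch -big_split; apply: prodr_gt0 => i _.
  by rewrite nmulr_rgt0 ?hBC ?hC // -ltnS.
have hD : D != 0 by apply/eqP => hD; move: ND; rewrite hD mulr0 ltxx.
have DD : 0 < D * D by rewrite lt0r mulf_neq0 //= -expr2 sqr_ge0.
rewrite -(pmulr_lgt0 _ DD) mulrA e //.
Qed.
End Pos.

Theorem mainTheorem2 (R : realFieldType) (q a b : R) (v : nat)
  (hq0 : 0 < q) (hq1 : q < 1) (hb : b < q^-1)
  (ha0 : 0 < a) (ha1 : a < q ^+ v) :
  forall x : nat, 0 < xi_check v q a b x.
Proof.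
move=> x.
have -> : xi_check v q a b x = qpoch (a * q ^- v) q v / qpoch (b * q) q v *
   Psi q (q ^- v) (a^-1 * b * q ^+ v.+1) (a^-1 * q) (q ^+ x.+1) v.+1.
  rewrite /xi_check /Psi; congr (_ * _); apply: eq_bigr => k _.
  by rewrite exprM.
apply: mulr_gt0; last exact: pos_main.
have hbq : b * q < 1.
  by have := ltr_pM2r hq0 b q^-1; rewrite hb mulVf // gt_eqF.
have hv : 0 < q ^+ v by apply: exprn_gt0.
apply: divr_gt0; apply: prodr_gt0 => i _; rewrite subr_gt0.
  have hi : (i <= v)%N by apply: ltnW.
  have h1 : q ^+ v <= q ^+ i by apply: qpow_le.
  have h2 : q ^+ i <= 1 by apply: qpow_le1.
  have h3 : a * q ^+ i < q ^+ v.
    apply: (le_lt_trans _ ha1); rewrite ler_piMr // ltW //.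
  rewrite mulrAC ltr_pdivrMr // mul1r //.
have h2 : q ^+ i <= 1 by apply: qpow_le1.
have h3 : 0 < q ^+ i by apply: exprn_gt0.
case: (lerP 0 b) => hb0.
  by apply: le_lt_trans hbq; rewrite -mulrA ler_wpM2l // ler_piMr // ltW.
apply: (@lt_trans _ _ 0); last exact: ltr01.
by rewrite -mulrA pmulr_llt0 // mulr_gt0.
Qed.
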